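(* Let $G$ be a $2$-connected finite simple graph. Then $\mathrm{nRel}(G;p)$ is concave down for $p\in(0,1)$ sufficiently close to $1$; that is, there is $\varepsilon>0$ such that $\frac{d^2}{dp^2}\mathrm{nRel}(G;p)<0$ for all $p\in(1-\varepsilon,1)$.
   Context: For a graph $G$ on $n$ vertices, a connected set is a nonempty vertex subset $C$ such that the induced subgraph $G[C]$ is connected. The node reliability of $G$ is the polynomial \[ \mathrm{nRel}(G;p)=\sum_{C}p^{|C|}(1-p)^{n-|C|}, \] the sum over all connected sets $C$ of $G$. *)

(* Defs.v *)
From mathcomp Require Import all_boot all_order all_algebra.
Set Implicit Arguments. Unset Strict Implicit. Unset Printing Implicit Defensive.
Import Order.TTheory GRing.Theory Num.Theory.

(* A finite simple graph on vertex type T is a symmetric irreflexive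
   relation e : rel T (hypotheses stated in the theorem). *)

Definition induced_rel (T : finType) (e : rel T) (C : {set T}) : rel T :=
  [rel u v | [&& u \in C, v \in C & e u v]].

Definition connected_set (T : finType) (e : rel T) (C : {set T}) : bool :=
  (C != set0) &&
  [forall x in C, forall y in C, connect (induced_rel e C) x y].

(* 2-connected (Diestel): more than 2 vertices, and G - X connected
   for every vertex set X with |X| < 2. *)
Definition two_connected (T : finType) (e : rel T) : bool :=
  (2 < #|T|)%N && connected_set e setT &&
  [forall v : T, connected_set e (~: [set v])].

Local Open Scope ring_scope.

Definition nRel (R : nzRingType) (T : finType) (e : rel T) : {poly R} :=
  \sum_(C : {set T} | connected_set e C)
     'X ^+ #|C| * (1 - 'X) ^+ (#|T| - #|C|).

(* Main.v *)
Require Import Defs.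
From mathcomp Require Import all_boot all_order all_algebra.
From mathcomp Require Import ring lra.
Import Order.TTheory GRing.Theory Num.Theory.
Local Open Scope ring_scope.

Lemma d2 (R : comNzRingType) (a b : nat) (p : R) :
  (('X^a * (1 - 'X)^+b : {poly R})^`(2)).[p] =
  (a * a.-1)%:R * p^+(a.-2) * (1-p)^+b
  - (2 * a * b)%:R * p^+(a.-1) * (1-p)^+(b.-1)
  + (b * b.-1)%:R * p^+a * (1-p)^+(b.-2).
Proof.
rewrite derivSn derivn1 !(derivD, derivM, derivMn, derivXn, deriv_exp, derivB, derivC, derivX, derivN).
rewrite !(hornerMn, hornerE) /=.
set A := p ^+ a.-2; set B := p ^+ a.-1; set C := p^+a.
set D := (1-p) ^+ b.-2; set E := (1-p) ^+ b.-1; set F := (1-p)^+b.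
clearbody A B C D E F. ring.
Qed.

Lemma sum_all (R : comNzRingType) (T : finType) :
  \sum_(C : {set T}) 'X^#|C| * (1 - 'X)^+(#|T| - #|C|) = 1 :> {poly R}.
Proof.
have := @bigA_distr {poly R} 0 1 *%R +%R T (fun _ => 'X) (fun _ => 1 - 'X).
rewrite (eq_bigr (fun _ => 1)); last first. move=> i _. rewrite [X in X = _]addrC; exact: subrK.
rewrite big1_eq => E; rewrite [RHS]E; apply: eq_big => // J _.
rewrite (bigID (mem J)) /=.
under [X in _ = X * _]eq_bigr => i Hi do rewrite Hi.
under [X in _ = _ * X]eq_bigr => i Hi do rewrite (negbTE Hi).
rewrite !prodr_const -(cardC (mem J)) addKn.
by congr (_ * _ ^+ _); apply: eq_card => x.
Qed.

Lemma term_pos (R : realFieldType) (n a b : nat) (p : R) :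
  (a + b = n)%N -> (2 <= b)%N -> 1/2 < p -> p < 1 -> (4 * n)%:R * (1 - p) < 1 ->
  0 < (a * a.-1)%:R * p^+(a.-2) * (1-p)^+b
  - (2 * a * b)%:R * p^+(a.-1) * (1-p)^+(b.-1)
  + (b * b.-1)%:R * p^+a * (1-p)^+(b.-2).
Proof.
move=> hab; case: b hab => [|[|b]] hab // _ hp1 hp2 hq.
have q0 : 0 < 1 - p by lra.
have p0 : 0 < p by lra.
case: a hab => [|a] hab.
  rewrite /= !(mul0n, mul1n, muln0, mul0r, mulr0n, subr0, add0r, mulr1, expr0).
  by rewrite oppr0 add0r mulr_gt0 ?exprn_gt0 // ltr0n.
rewrite /= !exprS.
set P := p ^+ a; set Q := (1 - p) ^+ b.
have P0 : 0 < P by rewrite exprn_gt0.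
have Q0 : 0 < Q by rewrite exprn_gt0.
set t1 := (X in 0 < X - _ + _).
have t10 : 0 <= t1.
  by rewrite /t1 !mulr_ge0 ?exprn_ge0 ?ler0n // ltW.
have han : (a.+1%:R : R) <= n%:R by rewrite ler_nat -hab leq_addr.
have hb : (1 : R) <= b.+1%:R by rewrite ler1n.
rewrite natrM in hq.
have h : 0 < b.+1%:R * p - 2 * a.+1%:R * (1 - p).
  have : a.+1%:R * (1 - p) <= n%:R * (1 - p) by rewrite ler_wpM2r // ltW.
  have : p <= b.+1%:R * p by rewrite ler_peMl // ltW.
  lra.
have b20 : (0:R) < b.+2%:R by rewrite ltr0n.
have := mulr_gt0 (mulr_gt0 (mulr_gt0 b20 P0) Q0) h.
move: t10; clearbody t1 P Q.
rewrite !natrM.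
set x := (1 - p); clearbody x.
rewrite -[b.+2]addn2 -[b.+1]addn1 -[a.+1]addn1 !natrD.
move=> ? ?.

nra.
Qed.

Lemma big_b (T : finType) (e : rel T) (h2 : two_connected e) (C : {set T}) :
  ~~ connected_set e C -> (2 <= #|T| - #|C|)%N.
Proof.
case/andP: h2 => /andP [_ hT] /forallP hv hC.
rewrite -(cardsC C) addKn.
case: (ltnP 1 #|~: C|) => // h.
exfalso; move: hC; apply/negP/negPn.
case: (posnP #|~: C|) => [/cards0_eq h0 | h1].
  by rewrite -[C]setCK h0 setC0.
have /cards1P [v hv1] : #|~: C| == 1%N by rewrite eqn_leq h1 h.
by rewrite -[C]setCK hv1.
Qed.

Theorem lemma3p3 (R : realFieldType) (T : finType) (e : rel T)
  (e_sym : symmetric e) (e_irr : irreflexive e)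
  (h2 : two_connected e) :
  exists eps : R, 0 < eps /\
    forall p : R, 1 - eps < p -> p < 1 ->
      ((nRel R e)^`(2)).[p] < 0.
Proof.
have n3 : (2 < #|T|)%N by case/andP: h2 => /andP [].
have N0 : (0 : R) < (4 * #|T|)%:R by rewrite ltr0n muln_gt0 /= (ltn_trans _ n3).
exists ((4 * #|T|)%:R^-1); split; first by rewrite invr_gt0.
move=> p hp1 hp2.
have hq : (4 * #|T|)%:R * (1 - p) < 1.
  by rewrite -ltr_pdivlMl // mulr1; lra.
have hp : 1/2 < p.
  have : (3 : R) <= #|T|%:R by rewrite (ler_nat R 3).
  move: hq; rewrite natrM => hq hN; nra.
have hsum := sum_all R T.
rewrite (bigID (connected_set e)) /= -/(nRel R e) in hsum.
set S := \sum_(C | ~~ connected_set e C) _ in hsum.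
have E : ((nRel R e)^`(2)).[p] + (S^`(2)).[p] = 0.
  by rewrite -hornerD -derivnD hsum -polyC1 derivnC /= hornerC.
have ES : (S^`(2)).[p] = \sum_(C | ~~ connected_set e C)
   (('X^#|C| * (1 - 'X)^+(#|T| - #|C|) : {poly R})^`(2)).[p].
  by rewrite /S raddf_sum horner_sum.
have pos : forall C : {set T}, ~~ connected_set e C ->
   0 < (('X^#|C| * (1 - 'X)^+(#|T| - #|C|) : {poly R})^`(2)).[p].
  move=> C hC; rewrite d2; apply: (@term_pos R #|T|) ; rewrite ?subnKC ?max_card //.
  exact: (@big_b T e h2 C hC).
have s0 : ~~ connected_set e (set0 : {set T}) by rewrite /connected_set eqxx.
rewrite (bigD1 set0) //= in ES.
have := pos _ s0.
have : 0 <= \sum_(i | ~~ connected_set e i && (i != set0))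
   (('X^#|i| * (1 - 'X)^+(#|T| - #|i|) : {poly R})^`(2)).[p].
  by apply: sumr_ge0 => i /andP [hi _]; apply: ltW; apply: pos.
lra.
Qed.
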